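(* Let $F$ be a positively expansive cellular automaton on $A^{\mathbb Z}$ and $\mu$ a $\sigma$-ergodic, $F$-invariant Borel probability measure. Then there exists a real $s>0$ such that $M_\mu((s,s))=1$.
   Context: $A$ is a finite alphabet, $\sigma(x)_i=x_{i+1}$, and $d(x,y)=2^{-\min\{|j|: x_j\ne y_j\}}$. $F$ is a cellular automaton of radius $r$, i.e. $F(x)_i=f(x_{i-r},\dots,x_{i+r})$. $B_n(x)=\{y: d(F^ix,F^iy)<2^{-n}\ \forall i\ge0\}$. $F$ is positively expansive if there is $n$ with $B_n(x)=\{x\}$ for all $x$. For $p\ge0$: ${}^{\{n\}}\alpha_p^F(x)=\{y:F^i(y)_j=F^i(x)_j\ \forall0\le i\le n,\ |j|\le p\}$. For a speed given by $g^\pm_n:A^{\mathbb Z}\to\mathbb N$, set $|G_n(x)|=g^+_n(x)+g^-_n(x)+1$ and $J_n(x)=\{j:-g^+_n(x)-p\le j\le g^-_n(x)+p\}$. For $y\in A^{\mathbb Z}$, ${}^{G_n(x)}\alpha_p^\sigma(y)=\{z:z_j=y_j\ \forall j\in J_n(x)\}$. For $0<\delta<1$, $\eta_{n,\delta}$ is the infimum of $\varepsilon>0$ such that some measurable $S$ with $\mu(S)\ge1-\delta$ satisfies $$\Big|\frac{-\log\mu({}^{G_i(x)}\alpha_p^\sigma(x))}{|G_i(x)|}-h_\mu(\sigma)\Big|<\varepsilon\quad\text{for all } x\in S,\ i\ge n.$$ $X^G_{n,\delta,p}$ is the set of $x$ for which this quantity, taken with $i=n$, is $\le\eta_{n,\delta}$.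 $\langle T^G_{n,p}(x)\rangle=\{z|_{J_n(x)}:z\in{}^{\{n\}}\alpha_p^F(x)\}$, and $T^G_{n,p}(x)$ is the union of the cylinders $\{z:z|_{J_n(x)}=w\}$ over these $w$. $T^G_{n,\delta,p}(x)=T^G_{n,p}(x)\cap X^G_{n,\delta,p}$ and $\langle T^G_{n,\delta,p}(x)\rangle=\{z|_{J_n(x)}:z\in T^G_{n,\delta,p}(x)\}$. $$M_{n,p,\delta}(G)=\int\Big(1-\frac{\log\#\langle T^G_{n,\delta,p}(x)\rangle}{-\log\mu({}^{G_n(x)}\alpha_p^\sigma(x))}\Big)d\mu(x),\qquad M_\mu(G)=\sup_p\limsup_{\delta\to0}\limsup_{n\to\infty}M_{n,p,\delta}(G).$$ $M_\mu((s,s))$ denotes $M_\mu(G)$ for $g^+_n=g^-_n=\lceil sn\rceil$. *)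

(* Defs.v *)
From HB Require Import structures.
From mathcomp Require Import all_boot all_order all_algebra.
From mathcomp Require Import all_classical all_reals all_analysis.
Set Implicit Arguments. Unset Strict Implicit. Unset Printing Implicit Defensive.
Import Order.TTheory GRing.Theory Num.Theory.
Import numFieldNormedType.Exports.
Local Open Scope classical_set_scope.
Local Open Scope ring_scope.

Definition cfg (A : finType) (a0 : A) := int -> A.
HB.instance Definition _ (A : finType) (a0 : A) :=
  Choice.copy (cfg a0) (int -> A).
HB.instance Definition _ (A : finType) (a0 : A) :=
  isPointed.Build (cfg a0) (fun _ => a0).

Section Config.
Variables (A : finType) (a0 : A).

(* central cylinders [set x | x_j = y_j for |j| <= n]: they generate the
   Borel sigma-algebra of the product (Cantor) topology on A^Z *)
Definition cylinders : set (set (cfg a0)) :=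
  [set C | exists (n : nat) (y : cfg a0),
      C = [set x | forall j : int, (`|j| <= n)%N -> x j = y j]].

End Config.

Definition Cfg (A : finType) (a0 : A) := g_sigma_algebraType (@cylinders A a0).
HB.instance Definition _ (A : finType) (a0 : A) :=
  Measurable.copy (Cfg a0) (g_sigma_algebraType (@cylinders A a0)).

Definition sigma_shift (A : Type) (x : int -> A) : int -> A := fun i => x (i + 1).

Definition cell_aut (A : Type) (r : nat) (f : (r.*2.+1).-tuple A -> A)
  (x : int -> A) : int -> A :=
  fun i => f [tuple x (i - r%:Z + k%:Z) | k < r.*2.+1].

(* the Cantor metric d(x,y) = 2^{-min{|j| : x_j <> y_j}}  (= 0 if x = y) *)
Definition cdist (R : realType) (A : eqType) (x y : int -> A) : R :=
  sup [set (2%:R : R) ^- `|j|%N | j in [set j : int | x j != y j]].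

Definition Bn (R : realType) (A : eqType) (F : (int -> A) -> int -> A)
  (n : nat) (x : int -> A) : set (int -> A) :=
  [set y | forall i : nat, cdist R (iter i F x) (iter i F y) < (2%:R : R) ^- n].

Definition pos_expansive (R : realType) (A : eqType)
  (F : (int -> A) -> int -> A) : Prop :=
  exists n : nat, forall x, Bn R F n x = [set x].

Section Measures.
Context {R : realType} {d : measure_display} {T : measurableType d}.
Variable mu : probability T R.

Definition measure_invariant (Tr : T -> T) : Prop :=
  forall S, measurable S -> mu (Tr @^-1` S) = mu S.

Definition measure_ergodic (Tr : T -> T) : Prop :=
  measure_invariant Tr /\
  forall S, measurable S -> Tr @^-1` S = S -> mu S = 0%E \/ mu S = 1%E.

Definition plogp (t : R) : R := t * ln t.

Definition Hpart (k n : nat) (g : T -> n.-tuple 'I_k) : R :=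
  - \sum_(v : n.-tuple 'I_k) plogp (fine (mu (g @^-1` [set v]))).

(* h_mu(Tr, xi) = lim_n (1/n) H(xi v Tr^{-1} xi v ... v Tr^{-(n-1)} xi) *)
Definition part_entropy (Tr : T -> T) (k : nat) (xi : T -> 'I_k) : R :=
  limn (fun n : nat =>
    Hpart (fun x => [tuple xi (iter i Tr x) | i < n]) / n%:R).

Definition ks_entropy (Tr : T -> T) : R :=
  sup [set h | exists (k : nat) (xi : T -> 'I_k),
         (forall i, measurable (xi @^-1` [set i])) /\ h = part_entropy Tr xi].

End Measures.

Section Mmu.
Variables (R : realType) (A : finType) (a0 : A).
Variable mu : probability (Cfg a0) R.
Variable F : Cfg a0 -> Cfg a0.
Variables (gp gm : nat -> Cfg a0 -> nat).

Definition hsig : R := ks_entropy mu (@sigma_shift A).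

Definition Gsize (n : nat) (x : Cfg a0) : nat := (gp n x + gm n x + 1)%N.

Definition inJ (n p : nat) (x : Cfg a0) (j : int) : Prop :=
  - ((gp n x + p)%N%:Z) <= j <= (gm n x + p)%N%:Z.

Definition cylG (n p : nat) (x y : Cfg a0) : set (Cfg a0) :=
  [set z | forall j, inJ n p x j -> z j = y j].

Definition ratioG (p i : nat) (x : Cfg a0) : R :=
  - ln (fine (mu (cylG i p x x))) / (Gsize i x)%:R.

Definition eta (p n : nat) (delta : R) : R :=
  inf [set eps : R | 0 < eps /\
         exists S : set (Cfg a0), measurable S /\ ((1 - delta)%:E <= mu S)%E /\
           forall x, S x -> forall i : nat, (n <= i)%N ->
             `|ratioG p i x - hsig| < eps].

Definition XG (n : nat) (delta : R) (p : nat) : set (Cfg a0) :=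
  [set x | `|ratioG p n x - hsig| <= eta p n delta].

Definition alphaF (n p : nat) (x : Cfg a0) : set (Cfg a0) :=
  [set y | forall i : nat, (i <= n)%N -> forall j : int, (`|j| <= p)%N ->
     iter i F y j = iter i F x j].

Definition TG (n p : nat) (x : Cfg a0) : set (Cfg a0) :=
  [set z | exists y, alphaF n p x y /\ forall j, inJ n p x j -> z j = y j].

Definition TGd (n : nat) (delta : R) (p : nat) (x : Cfg a0) : set (Cfg a0) :=
  TG n p x `&` XG n delta p.

Definition wordJ (n p : nat) (x z : Cfg a0) :
  (gp n x + gm n x + p.*2 + 1).-tuple A :=
  [tuple z (- ((gp n x + p)%N%:Z) + k%:Z) | k < (gp n x + gm n x + p.*2 + 1)%N].

Definition countTGd (n : nat) (delta : R) (p : nat) (x : Cfg a0) : nat :=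
  #|[set w | `[< exists z, TGd n delta p x z /\ wordJ n p x z = w >]]|.

Definition Mnpd (n p : nat) (delta : R) : \bar R :=
  (\int[mu]_x (1 - ln (countTGd n delta p x)%:R
                    / (- ln (fine (mu (cylG n p x x)))))%:E)%E.

Definition Mmu : \bar R :=
  ereal_sup [set limf_esup (fun delta : R => limn_esup (fun n => Mnpd n p delta))
                           (0 : R)^'+ | p in [set: nat]].

End Mmu.

Definition cspeed (R : realType) (T : Type) (s : R) (n : nat) (_ : T) : nat :=
  `|Num.ceil (s * n%:R)|%N.

(* Main.v *)
Require Import Defs.
From HB Require Import structures.
From mathcomp Require Import all_boot all_order all_algebra.
From mathcomp Require Import all_classical all_reals all_analysis.
From mathcomp Require Import measurable_realfun zify ring lra.
From Stdlib Require Import Classical.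
Import Order.TTheory GRing.Theory Num.Theory.
Import numFieldNormedType.Exports.
Local Open Scope classical_set_scope.
Local Open Scope ring_scope.

Section Gen.
Local Open Scope ereal_scope.
Context {R : realType}.

Lemma limf_esup_le1 (T0 : choiceType) (T : filteredType T0) (F : set_system T) (FF : Filter F) (f : T -> \bar R) :
  (forall t, f t <= 1) -> limf_esup f F <= 1.
Proof.
move=> f1; rewrite /limf_esup.
apply: le_trans (ereal_inf_lbound _) _.
  exists setT => //; exact: filterT.
by apply: ge_ereal_sup => _ [t _ <-].
Qed.

Lemma limf_esup_eq1 (T0 : choiceType) (T : filteredType T0) (F : set_system T) (FF : ProperFilter F) (f : T -> \bar R) :
  (forall t, f t <= 1) -> F [set t | f t = 1] -> limf_esup f F = 1.
Proof.
move=> f1 F1; apply/le_anti; rewrite limf_esup_le1 //=.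
rewrite /limf_esup; apply: le_ereal_inf_tmp => _ [V FV <-].
have [t [Vt ft]] := filter_ex (filterI FV F1).
by apply: ereal_sup_ubound; exists t => //.
Qed.

End Gen.

Section Int.
Local Open Scope ereal_scope.
Context {R : realType} {d : measure_display} {T : measurableType d}.
Variable mu : probability T R.
Import HBNNSimple.

Lemma int_le1 (f : T -> R) : (forall x, (f x <= 1)%R) ->
  \int[mu]_x (f x)%:E <= 1.
Proof.
move=> f1; rewrite integralE.
have h0 : 0 <= \int[mu]_x ((fun x => (f x)%:E) ^\- x).
  by apply: integral_ge0 => x _; exact: funeneg_ge0.
have h1 : \int[mu]_x ((fun x => (f x)%:E) ^\+ x) <= 1.
  rewrite ge0_integralTE; last by move=> x; exact: funepos_ge0.
  apply: ge_ereal_sup => _ [h /= hle <-].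
  have := integral_nnsfun mu measurableT h; rewrite patch_setT; move=> <-; idtac.
  apply: (@le_trans _ _ (\int[mu]_x (cst 1 x))).
    apply: ge0_le_integral => //.
    - move=> x _; rewrite lee_fin. by [].
    - by apply/measurable_EFinP; exact: measurable_funP.
    - move=> x _ /=; apply: le_trans (hle x) _.
      rewrite funeposE ge_max lee01 andbT lee_fin; exact: f1.
  by rewrite (integral_cst mu measurableT) mul1e probability_le1.
apply: le_trans (leeB h1 h0) _; by rewrite sube0.
Qed.
End Int.

Section Comb.
Variables (A : finType) (a0 : A) (r : nat) (f : (r.*2.+1)%N.-tuple A -> A).
Local Notation F := (@cell_aut A r f).

Lemma loc i : forall (x x' : int -> A) j,
  (forall k, j - (i*r)%N%:Z <= k <= j + (i*r)%N%:Z -> x k = x' k) ->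
  iter i F x j = iter i F x' j.
Proof.
elim: i => [|i IH] x x' j H /=; first by apply: H; lia.
rewrite /cell_aut; congr f; apply: eq_mktuple => k.
apply: IH => k' Hk'; apply: H.
have := ltn_ord k; move: Hk'; move: (nat_of_ord k) => kk; rewrite -addnn; lia.
Qed.

Definition shift (c : int) (x : int -> A) : int -> A := fun j => x (j + c).

Lemma F_shift c x : F (shift c x) = shift c (F x).
Proof.
apply: funext => j; rewrite /cell_aut /shift; congr f; apply: eq_mktuple => k.
congr x; lia.
Qed.

Lemma iter_shift i c x : iter i F (shift c x) = shift c (iter i F x).
Proof. by elim: i => [|i IH] //=; rewrite IH F_shift. Qed.


Lemma two_pow_pos (R : realType) n : ((2%:R : R) ^+ n) \is Num.pos.
Proof. by rewrite posrE exprn_gt0. Qed.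

Lemma exp_agree (R : realType) m : (forall x, Bn R F m x = [set x]) ->
  forall x y, (forall i j, (absz j <= m)%N -> iter i F x j = iter i F y j) -> x = y.
Proof.
move=> Hm x y H.
have : Bn R F m x y.
  move=> i; rewrite /cdist.
  set S := [set _ | _ in _].
  case: (pselect (S !=set0)) => [Sn|Sn].
    apply: (@le_lt_trans _ _ ((2%:R : R) ^- m.+1)).
      apply: ge_sup => // _ [j /= ne <-].
      have hm : (m < absz j)%N.
        rewrite ltnNge; apply/negP => hj; move/eqP: ne; apply; exact: H.
      rewrite lef_pV2 ?two_pow_pos // ler_eXn2l //; last by rewrite ltr1n.
    by rewrite ltf_pV2 ?two_pow_pos // ltr_eXn2l // ltr1n.
  have -> : S = set0.
    by apply/seteqP; split => z Sz //; exfalso; apply: Sn; exists z.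
  by rewrite sup0 invr_gt0 exprn_gt0.
by rewrite Hm => ->.
Qed.


Definition agreeW k (x x' : int -> A) := forall j, (absz j < k)%N -> x j = x' j.
Definition Bad m N (x y : int -> A) :=
  (forall i, (i <= N)%N -> forall j, (absz j <= m)%N -> iter i F x j = iter i F y j)
  /\ exists j, (absz j <= m.+1)%N /\ x j <> y j.
Definition good m k (p : (int -> A) * (int -> A)) := forall N,
  exists q : (int -> A) * (int -> A),
    Bad m N q.1 q.2 /\ agreeW k q.1 p.1 /\ agreeW k q.2 p.2.

Lemma Bad_mono m N N' x y : (N' <= N)%N -> Bad m N x y -> Bad m N' x y.
Proof.
move=> hN [h1 h2]; split => // i hi; apply: h1; exact: leq_trans hi hN.
Qed.

Definition ext (k : nat) (p : (int -> A) * (int -> A)) (a : A * A * A * A) :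
  (int -> A) * (int -> A) :=
 (fun j => if j == k%:Z then a.1.1.1 else if j == - k%:Z then a.1.1.2 else p.1 j,
  fun j => if j == k%:Z then a.1.2 else if j == - k%:Z then a.2 else p.2 j).

Lemma ext_agree k p a : agreeW k (ext k p a).1 p.1 /\ agreeW k (ext k p a).2 p.2.
Proof.
split => j hj /=; (case: ifP => [/eqP ?|_]; first lia);
  (case: ifP => [/eqP ?|_]; first lia) => //.
Qed.

Lemma step m k p : good m k p ->
  exists p', good m k.+1 p' /\ agreeW k p'.1 p.1 /\ agreeW k p'.2 p.2.
Proof.
move=> gp; apply: NNPP => Hno.
have Hn : forall a : A * A * A * A, exists N, forall q : (int -> A) * (int -> A),
    not (Bad m N q.1 q.2 /\ agreeW k.+1 q.1 (ext k p a).1 /\ agreeW k.+1 q.2 (ext k p a).2).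
  move=> a; apply: NNPP => Hc; apply: Hno; exists (ext k p a).
  split; last exact: ext_agree.
  move=> N; apply: NNPP => Hq; apply: Hc; exists N => q Hq'; apply: Hq.
  by exists q.
have [Na HNa] := choice Hn.
have [q [Bq [a1 a2]]] := gp (\max_(a : A * A * A * A) Na a).
pose a := (q.1 k%:Z, q.1 (- k%:Z), q.2 k%:Z, q.2 (- k%:Z)).
apply: (HNa a q); split; first by apply: Bad_mono Bq; exact: leq_bigmax.
split => j hj /=; (case: ifP => [/eqP ->//|/negbT/eqP h1]);
  (case: ifP => [/eqP ->//|/negbT/eqP h2]).
  by rewrite a1 //; lia.
by rewrite a2 //; lia.
Qed.


Lemma compact m
  (Hexp : forall x y, (forall i j, (absz j <= m)%N -> iter i F x j = iter i F y j) -> x = y) :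
  exists N, forall x y,
    (forall i, (i <= N)%N -> forall j, (absz j <= m)%N -> iter i F x j = iter i F y j) ->
    forall j, (absz j <= m.+1)%N -> x j = y j.
Proof.
apply: NNPP => Hno.
have H : forall N, exists x y, Bad m N x y.
  move=> N; apply: NNPP => Hc; apply: Hno; exists N => x y Hxy j hj.
  apply: NNPP => ne; apply: Hc; exists x, y; split => //; by exists j.
have Hnext : forall kp : nat * ((int -> A) * (int -> A)), exists p',
    good m kp.1 kp.2 -> good m kp.1.+1 p' /\ agreeW kp.1 p'.1 kp.2.1 /\ agreeW kp.1 p'.2 kp.2.2.
  move=> [k p]; case: (classic (good m k p)) => g; last by exists p.
  by have [p' hp'] := @step m k p g; exists p'.
have [nxt Hnxt] := choice Hnext.
pose P := fix P (k : nat) := if k is k'.+1 then nxt (k', P k')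
  else (fun _ : int => a0, fun _ : int => a0).
have gP : forall k, good m k (P k).
  elim=> [|k IH].
    move=> N; have [x [y B]] := H N; exists (x, y); split => //.
  by have [] := Hnxt (k, P k) IH.
have aP : forall k d, agreeW k (P (k + d)%N).1 (P k).1 /\ agreeW k (P (k + d)%N).2 (P k).2.
  move=> k; elim=> [|d [IH1 IH2]]; first by rewrite addn0.
  have [_ [h1 h2]] := Hnxt (k + d, P (k + d)%N) (gP _).
  rewrite addnS /=; split => j hj.
    by rewrite h1 /= ?IH1 //; lia.
  by rewrite h2 /= ?IH2 //; lia.
pose X := fun j => (P (absz j).+1).1 j.
pose Y := fun j => (P (absz j).+1).2 j.
have aX : forall k, agreeW k X (P k).1 /\ agreeW k Y (P k).2.
  move=> k; split=> j hj; rewrite /X /Y;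
    have := aP (absz j).+1 (k - (absz j).+1)%N; rewrite subnKC //;
    case=> h1 h2; symmetry; [apply: h1|apply: h2]; lia.
have XY : X = Y.
  apply: Hexp => i j hj.
  have [q [[Bq _] [q1 q2]]] := gP (m + i * r).+1 i.
  have [hX hY] := aX (m + i * r).+1.
  transitivity (iter i F q.1 j).
    by apply: loc => k hk; rewrite hX ?q1 //; lia.
  transitivity (iter i F q.2 j); first exact: Bq.
  by apply: loc => k hk; rewrite hY ?q2 //; lia.
have [q [[_ [j [hj ne]]] [q1 q2]]] := gP m.+2 0%N.
have [hX hY] := aX m.+2.
apply: ne; rewrite q1 ?q2; try lia.
by rewrite -hX ?XY ?hY; try lia.
Qed.


Section PropS.
Variables (m N : nat).
Hypothesis HN : forall x y,
    (forall i, (i <= N)%N -> forall j, (absz j <= m)%N -> iter i F x j = iter i F y j) ->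
    forall j, (absz j <= m.+1)%N -> x j = y j.

Lemma step_c (c : int) x y :
  (forall i, (i <= N)%N -> forall j, c - m%:Z <= j <= c + m%:Z -> iter i F x j = iter i F y j) ->
  forall j, c - m%:Z - 1 <= j <= c + m%:Z + 1 -> x j = y j.
Proof.
move=> H j hj.
have := HN (shift c x) (shift c y) _ (j - c).
rewrite /shift subrK; apply; last by lia.
move=> i hi j' hj'; rewrite !iter_shift /shift; apply: H => //; lia.
Qed.

Lemma propag (P : nat) : (m <= P)%N -> forall t n x y,
  (forall i, (i <= n + t * N)%N -> forall j, (absz j <= P)%N -> iter i F x j = iter i F y j) ->
  forall i, (i <= n)%N -> forall j, (absz j <= P + t)%N -> iter i F x j = iter i F y j.
Proof.
move=> hP; elim=> [|t IH] n x y H i hi j hj.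
  by apply: H; lia.
have H' := IH (n + N)%N x y.
have {}H' : forall i, (i <= n + N)%N -> forall j, (absz j <= P + t)%N ->
    iter i F x j = iter i F y j.
  apply: H' => i' hi' j' hj'; apply: H => //; lia.
case: (leqP (absz j) (P + t)) => hjt; first by apply: H' => //; lia.
have step' := @step_c _ (iter i F x) (iter i F y).
have [jpos|jneg] := lerP 0 j.
  apply: (step' (P + t - m)%N%:Z); last by lia.
  move=> i' hi' j' hj'; rewrite -!iterD; apply: H'; lia.
apply: (step' (- (P + t - m)%N%:Z)); last by lia.
move=> i' hi' j' hj'; rewrite -!iterD; apply: H'; lia.
Qed.

Lemma determ (P : nat) : (m <= P)%N -> forall t n x y, (t * N <= n)%N ->
  (forall i, (i <= n)%N -> forall j, (absz j <= P)%N -> iter i F x j = iter i F y j) ->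
  forall j, (absz j <= P + t)%N -> x j = y j.
Proof.
move=> hP t n x y htn H j hj.
apply: (@propag P hP t 0%N x y _ 0%N) => // i hi j' hj'; apply: H => //; lia.
Qed.
End PropS.

End Comb.

Lemma arith (R : realType) (N n : nat) : (0 < N)%N -> (N.*2 <= n)%N ->
  (absz (Num.ceil ((2 * N%:R : R)^-1 * n%:R)) * N <= n)%N.
Proof.
move=> N0 hn.
set c := Num.ceil _.
have c0 : 0 <= c by rewrite ceil_ge0; apply: (@lt_le_trans _ _ 0) => //;
  rewrite mulr_ge0 // invr_ge0 mulr_ge0.
have hc := ceilB1_lt ((2 * N%:R : R)^-1 * n%:R).
rewrite -/c mulrC ltr_pdivlMr in hc; last by rewrite mulr_gt0 // ltr0n.
rewrite -(ler_nat R) natrM natr_absz ger0_norm //.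
have b0 : (0 : R) < N%:R by rewrite ltr0n.
have bn : (2 * N%:R : R) <= n%:R by rewrite -natrM ler_nat mul2n.

move: hc; rewrite intrD /= => hc.
nra.
Qed.


Theorem proposition1 (R : realType) (A : finType) (a0 : A) (r : nat)
  (f : (r.*2.+1)%N.-tuple A -> A) (mu : probability (Cfg a0) R) :
  pos_expansive R (@cell_aut A r f) ->
  measure_ergodic mu (@sigma_shift A) ->
  measure_invariant mu (@cell_aut A r f) ->
  exists s : R, 0 < s /\
    Mmu mu (@cell_aut A r f) (@cspeed R (Cfg a0) s) (@cspeed R (Cfg a0) s) = 1%E.
Proof.
move=> [m Hm] _ _.
have Hexp := @exp_agree A r f R m Hm.
have [N0 HN0] := @compact A a0 r f m Hexp.
pose N := N0.+1.
have HN : forall x y : int -> A,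
    (forall i, (i <= N)%N -> forall j, (absz j <= m)%N ->
       iter i (cell_aut f) x j = iter i (cell_aut f) y j) ->
    forall j, (absz j <= m.+1)%N -> x j = y j.
  move=> x y H; apply: HN0 => i hi; apply: H; exact: leqW.
pose s : R := (2 * N%:R)^-1.
exists s; split; first by rewrite invr_gt0 mulr_gt0 // ltr0n.
have Hcount : forall p n delta x, (m <= p)%N -> (N.*2 <= n)%N ->
    (countTGd mu (cell_aut f) (cspeed s) (cspeed s) n delta p x <= 1)%N.
  move=> p n delta x hp hn; rewrite /countTGd.
  apply: (@leq_trans #|pred1 (wordJ (cspeed s) (cspeed s) n p x x)|); last by rewrite card1.
  apply: subset_leq_card; apply/fintype.subsetP => w; rewrite in_setE => /asboolP [z [[[y [ay zy]] _] <-]].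
  rewrite inE.
  have ht := @arith R N n isT hn.
  have hd : forall j, (absz j <= p + cspeed s n x)%N -> y j = x j.
    exact: (@determ A r f m N HN p hp _ n y x ht ay).
  apply/eqP; rewrite /wordJ; apply: eq_mktuple => k.
  have := ltn_ord k; move: (nat_of_ord k) => kk hk.
  rewrite /inJ in zy; move: (cspeed s n x) hd hk zy => t hd hk zy.
  rewrite -addnn in hk.
  rewrite zy; last by lia.
  apply: hd; lia.
have Hmeas : forall (n p : nat) (x : Cfg a0),
    measurable (cylG (cspeed s) (cspeed s) n p x x).
  move=> n p x.
  have hc : @cylinders A a0 (cylG (cspeed s) (cspeed s) n p x x).
    exists (cspeed s n x + p)%N, x.
    by apply/seteqP; split => z /= hz j hj; apply: hz; rewrite /inJ in hj *; lia.
  exact: (@sub_sigma_algebra _ setT _ _ hc).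
have Hle : forall (n p : nat) (delta : R) (x : Cfg a0),
    1 - ln (countTGd mu (cell_aut f) (cspeed s) (cspeed s) n delta p x)%:R /
      (- ln (fine (mu (cylG (cspeed s) (cspeed s) n p x x)))) <= 1.
  move=> n p delta x; rewrite gerBl divr_ge0 //.
    case: (posnP (countTGd mu (cell_aut f) (cspeed s) (cspeed s) n delta p x)) => [->|c0].
      by rewrite ln0.
    by apply: ln_ge0; rewrite ler1n.
  rewrite oppr_ge0 ln_le0 //.
  have h := probability_le1 mu (Hmeas n p x).
  have h0 := measure_ge0 mu (cylG (cspeed s) (cspeed s) n p x x).
  by move: h0 h; case: (mu _) => [e| |] //=; rewrite !lee_fin.
have H1 : forall p n delta, (m <= p)%N -> (N.*2 <= n)%N ->
    Mnpd mu (cell_aut f) (cspeed s) (cspeed s) n p delta = 1%E.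
  move=> p n delta hp hn; rewrite /Mnpd (eq_integral (cst 1%E)); last first.
    move=> x _; have := Hcount p n delta x hp hn.
    case: (countTGd _ _ _ _ _ _ _ _) => [|[|//]] _.
      by rewrite ln0 // mul0r subr0.
    by rewrite ln1 mul0r subr0.
  by rewrite integral_cst // mul1e; exact: probability_setT.
have Hinner_le : forall (p : nat) (delta : R),
    (limn_esup (fun n => Mnpd mu (cell_aut f) (cspeed s) (cspeed s) n p delta) <= 1)%E.
  move=> p delta; rewrite /limn_esup; apply: limf_esup_le1 => n.
  rewrite /Mnpd; apply: int_le1 => x; exact: Hle.
have Hinner_eq : forall (p : nat) (delta : R), (m <= p)%N ->
    limn_esup (fun n => Mnpd mu (cell_aut f) (cspeed s) (cspeed s) n p delta) = 1%E.
  move=> p delta hp; rewrite /limn_esup; apply: limf_esup_eq1 => [n|].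
    rewrite /Mnpd; apply: int_le1 => x; exact: Hle.
  exists N.*2 => // n /= hn; exact: H1.
rewrite /Mmu; apply/le_anti/andP; split.
  apply: ge_ereal_sup => _ [p _ <-]; apply: limf_esup_le1 => delta; exact: Hinner_le.
apply: ereal_sup_ubound; exists m => //.
apply: limf_esup_eq1 => [delta|]; first exact: Hinner_le.
apply: filterE => delta; exact: Hinner_eq.
Qed.
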